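(* For a locally convex space $E$ consider the properties: (1) $E$ has an $\omega^\omega$-base; (2) $E$ has a countable $\mathsf s^*$-network at zero; (3) $E$ has a countable $\mathsf{cs}^*$-network at zero; (4) $E$ has a countable $\mathsf{cs}^\bullet$-network at zero; (5) $E$ has a countable radial network; (6) each uncountable subset of $E$ contains an infinite bounded subset; (7) $E$ contains an infinite-dimensional compact set. Then $(1)\Rightarrow(2)\Rightarrow(3)\Rightarrow(4)\Rightarrow(5)\Rightarrow(6)$. If moreover $E$ has an uncountable Hamel basis, then $(6)\Rightarrow(7)$.
   Context: $E$ has an $\omega^\omega$-base if there is a neighborhood base $(U_\alpha)_{\alpha\in\omega^\omega}$ at zero with $U_\beta\subseteq U_\alpha$ whenever $\alpha\le\beta$ pointwise. A sequence $(x_n)$ accumulates at $x$ if every neighborhood of $x$ contains $x_n$ for infinitely many $n$. A family $\mathcal N$ of subsets of $E$ is: an $\mathsf s^*$-network at $x$ if for every neighborhood $O_x$ of $x$ and every sequence $(x_n)$ accumulating at $x$ there is $N\in\mathcal N$ with $N\subseteq O_x$ and $\{n:x_n\in N\}$ infinite; a $\mathsf{cs}^*$-network at $x$ if the same holds for every sequence converging to $x$; a $\mathsf{cs}^\bullet$-network at $x$ if for every neighborhood $O_x$ of $x$ and every sequence $(x_n)$ converging to $x$ there is $N\in\mathcal N$ with $N\subseteq O_x$ containing some $x_n$. A radial network is a family $\mathcal N$ of subsets of $E$ such that for every neighborhood $U$ of zero and every $x\in E$ there are $N\in\mathcal N$ and a nonzero real $\varepsilon$ with $\varepsilon x\in N\subseteq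 U$. Bounded: $B\subseteq nU$ for some $n$, for every neighborhood $U$ of zero. An infinite-dimensional compact set is one of infinite topological dimension (equivalently, not contained in a finite-dimensional subspace). *)

(* Defs.v *)
From HB Require Import structures.
From mathcomp Require Import all_boot all_order all_algebra.
From mathcomp Require Import all_classical all_reals all_analysis.
Set Implicit Arguments. Unset Strict Implicit. Unset Printing Implicit Defensive.
Import Order.TTheory GRing.Theory Num.Theory.
Local Open Scope classical_set_scope.
Local Open Scope ring_scope.

Section Defs.
Variables (R : realType) (E : tvsType R).

Definition has_omega_omega_base : Prop :=
  exists U : (nat -> nat) -> set E,
    (forall a, nbhs (0 : E) (U a)) /\
    (forall V, nbhs (0 : E) V -> exists a, U a `<=` V) /\
    (forall a b : nat -> nat, (forall n, (a n <= b n)%N) -> U b `<=` U a).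

Definition clusters_at (u : nat -> E) (x : E) : Prop :=
  forall V, nbhs x V -> infinite_set [set n | V (u n)].

Definition s_star_network_at (Nf : set (set E)) (x : E) : Prop :=
  forall O, nbhs x O -> forall u : nat -> E, clusters_at u x ->
    exists2 N, Nf N & N `<=` O /\ infinite_set [set n | N (u n)].

Definition cs_star_network_at (Nf : set (set E)) (x : E) : Prop :=
  forall O, nbhs x O -> forall u : nat -> E, u @ \oo --> x ->
    exists2 N, Nf N & N `<=` O /\ infinite_set [set n | N (u n)].

Definition cs_bullet_network_at (Nf : set (set E)) (x : E) : Prop :=
  forall O, nbhs x O -> forall u : nat -> E, u @ \oo --> x ->
    exists2 N, Nf N & N `<=` O /\ exists n, N (u n).

Definition radial_network (Nf : set (set E)) : Prop :=
  forall U, nbhs (0 : E) U -> forall x : E,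
    exists2 N, Nf N & exists eps : R, eps != 0 /\ N (eps *: x) /\ N `<=` U.

Definition tvs_bounded (B : set E) : Prop :=
  forall U, nbhs (0 : E) U -> exists n : nat, B `<=` [set n%:R *: u | u in U].

Definition fin_span (n : nat) (v : 'I_n -> E) : set E :=
  [set \sum_(i < n) c i *: v i | c in [set: 'I_n -> R]].

Definition hamel_basis (B : set E) : Prop :=
  (forall (n : nat) (v : 'I_n -> E) (c : 'I_n -> R),
      injective v -> (forall i, B (v i)) ->
      \sum_(i < n) c i *: v i = 0 -> forall i, c i = 0) /\
  (forall x : E, exists n (v : 'I_n -> E),
      (forall i, B (v i)) /\ fin_span v x).

Definition P1 := has_omega_omega_base.
Definition P2 := exists Nf, countable Nf /\ s_star_network_at Nf 0.
Definition P3 := exists Nf, countable Nf /\ cs_star_network_at Nf 0.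
Definition P4 := exists Nf, countable Nf /\ cs_bullet_network_at Nf 0.
Definition P5 := exists Nf, countable Nf /\ radial_network Nf.
Definition P6 := forall A : set E, ~ countable A ->
  exists B, B `<=` A /\ infinite_set B /\ tvs_bounded B.
Definition P7 := exists K : set E, compact K /\
  forall (n : nat) (v : 'I_n -> E), ~ (K `<=` fin_span v).

End Defs.

(* Main.v *)
Require Import Defs.
From HB Require Import structures.
From mathcomp Require Import all_boot all_order all_algebra.
From mathcomp Require Import all_classical all_reals all_analysis.
Import Order.TTheory GRing.Theory Num.Theory.
Local Open Scope classical_set_scope.
Local Open Scope ring_scope.
Lemma inj_nat (T : Type) (B : set T) : infinite_set B -> exists2 b : nat -> T, (forall n, B (b n)) & injective b.
Proof.
move/infiniteP => /card_leP [f].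
exists (fun n => val (f (@SigSub _ _ _ n (mem_set I)))).
  move=> n; exact: (set_valP (f _)).
move=> m n /val_inj /(@inj _ _ _ f) H.
- have := H (in_setT _) (in_setT _). by move=> [].
Qed.
Section S.
Context (R : realType) (E : tvsType R).
Lemma span_indep (n : nat) (v : 'I_n -> E) (y : 'I_n.+1 -> E) :
  (forall j, fin_span v (y j)) ->
  exists2 w : 'I_n.+1 -> R, (exists j, w j != 0) & \sum_(j < n.+1) w j *: y j = 0.
Proof.
move=> Hy.
have /choice [c Hc] : forall j, exists c : 'I_n -> R, \sum_(i < n) c i *: v i = y j.
  by move=> j; have [c _ Hc] := Hy j; exists c.
pose C : 'M[R]_(n.+1, n) := \matrix_(j, i) c j i.
have Kn0 : kermx C != 0.
  apply/negP => /eqP K0; have := mxrank_ker C; rewrite K0 mxrank0 => /esym/eqP.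
  by rewrite subn_eq0 leqNgt ltnS rank_leq_col.
have [j0 Hj0] : exists j0, row j0 (kermx C) != 0.
  apply: contrapT => H; move/negP: Kn0; apply; apply/eqP/row_matrixP => i.
  rewrite row0; apply/eqP; apply: contrapT => Hi; apply: H; exists i; exact/negP.
pose w := row j0 (kermx C).
have wC : w *m C = 0 by rewrite /w -row_mul mulmx_ker row0.
exists (fun j => w 0 j).
  apply: contrapT => H; move/negP: Hj0; apply; apply/eqP/rowP => j.
  rewrite [RHS]mxE; apply/eqP; apply: contrapT => Hi; apply: H; exists j; exact/negP.
under eq_bigr => j _ do rewrite -Hc scaler_sumr.
rewrite exchange_big /=.
apply: big1 => i _.
have Hi : \sum_(j < n.+1) w 0 j * c j i = 0.
  have := congr1 (fun M : 'M[R]_(1, n) => M 0 i) wC; rewrite /= [RHS]mxE mxE => H0.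
  by rewrite -[RHS]H0; apply: eq_bigr => j _; rewrite [C _ _]mxE.
by rewrite -[RHS](scale0r (v i)) -Hi scaler_suml; apply: eq_bigr => j _; rewrite scalerA.
Qed.
Lemma cvg_seqP (u : nat -> E) (x : E) : u @ \oo --> x <-> forall V : set E, nbhs x V -> exists N, forall n, (N <= n)%N -> V (u n).
Proof.
split.
  move=> H V /H [N _ HN]; exists N => n Hn; exact: HN.
move=> H V /H [N HN]; exists N => // n; exact: HN.
Qed.
Lemma scale_nbhs (x : E) (U : set E) : nbhs 0 U ->
  exists2 d : R, 0 < d & exists2 W : set E, nbhs x W & forall t w, `|t| < d -> W w -> U (t *: w).
Proof.
move=> U0; have /= := @scale_continuous R E (0, x) U.
rewrite scale0r => /(_ U0)[]/= B [B1 B2] BU.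
move: B1 => /nbhs_ballP[d d0 Hd].
exists d => //; exists B.2 => // t w td Ww.
apply: (BU (t, w)); split => //=; apply: Hd.
by rewrite /ball /= sub0r normrN.
Qed.
Lemma archi_nat (c : R) : exists n : nat, c < n%:R.
Proof.
exists (Num.Def.archi_bound `|c|); apply: (le_lt_trans (ler_norm c)).
exact: archi_boundP.
Qed.
Lemma p6p7 : (exists B : set E, hamel_basis B /\ ~ countable B) -> P6 E -> P7 E.
Proof.
move=> [Bh [[Hind _] Hunc]] H6.
have [B' [B'sub [B'inf B'bd]]] := H6 Bh Hunc.
have [b bfun binj] : exists2 b : nat -> E, (forall n, B' (b n)) & injective b.
  exact: inj_nat.
pose y n := (n.+1%:R)^-1 *: b n.
have ycvg : y @ \oo --> (0:E).
  apply/cvg_seqP => V HV.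
  have [d d0 [W W0 HW]] := @scale_nbhs 0 V HV.
  have [m Hm] := B'bd W W0.
  have [N HN] := archi_nat (m%:R / d).
  exists N => n Nn; rewrite /y; have [w Ww <-] := Hm _ (bfun n).
  rewrite scalerA; apply: HW Ww.
  rewrite ger0_norm ?mulr_ge0 ?invr_ge0 ?ler0n // mulrC ltr_pdivrMr ?ltr0n //.
  move: HN; rewrite ltr_pdivrMr // => HN; apply: (lt_le_trans HN).
  rewrite [X in _ <= X]mulrC ler_pM2r // ler_nat; exact: leqW.
pose K := [set x : E | x = 0 \/ exists n, x = y n].
exists K; split.
  move=> F PF FK.
  case: (pselect (cluster F 0)) => [c0|nc0]; first by exists 0; split => //; left.
  have [G [V [FG [V0 GV]]]] : exists G V, F G /\ nbhs (0:E) V /\ ~ (G `&` V !=set0).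
    apply: contrapT => H; apply: nc0 => G V FG V0; apply: contrapT => HGV; apply: H.
    by exists G, V.
  have [N HN] := proj1 (cvg_seqP y 0) ycvg V V0.
  have Ffin : F (y @` `I_N).
    apply: filterS (filterI FK FG) => x [Kx Gx]; case: Kx => [x0|[m xm]].
      by exfalso; apply: GV; exists x; split => //; rewrite x0; exact: nbhs_singleton.
    case: (ltnP m N) => Hm; first by exists m.
    by exfalso; apply: GV; exists x; split => //; rewrite xm; exact: HN.
  have [z [[m _ <-] cz]] := finite_compact (finite_image y (finite_II N)) PF Ffin.
  by exists (y m); split => //; right; exists m.
move=> n v Hsub.
have [w [j Hj] Hw] := @span_indep n v (fun j : 'I_n.+1 => y j)
  (fun j => Hsub _ (or_intror (ex_intro _ (val j) erefl))).
have Hbi : injective (fun j0 : 'I_n.+1 => b j0) by move=> j1 j2 /binj /val_inj.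
have Hs : \sum_(i < n.+1) (w i / i.+1%:R) *: b i = 0.
  by rewrite -[RHS]Hw; apply: eq_bigr => j' _; rewrite /y scalerA.
have := Hind n.+1 (fun j : 'I_n.+1 => b j) (fun j => w j / (j.+1%:R)) Hbi (fun j => B'sub _ (bfun j)) Hs j.
move/eqP; by rewrite mulf_eq0 invr_eq0 pnatr_eq0 orbF (negbTE Hj).
Qed.
Lemma condense (T : Type) (A : set T) (h : T -> nat -> nat) : ~ countable A ->
  exists y, forall j, infinite_set [set x | A x /\ mkseq (h x) j = mkseq (h y) j].
Proof.
move=> Hunc; apply: contrapT => Hn; apply: Hunc.
pose G (s : seq nat) := [set x | A x /\ mkseq (h x) (size s) = s].
have sub : A `<=` \bigcup_(s in [set s | finite_set (G s)]) G s.
  move=> x Ax.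
  have [j Hj] : exists j, finite_set [set z | A z /\ mkseq (h z) j = mkseq (h x) j].
    apply: contrapT => H; apply: Hn; exists x => j Hj'; apply: H; by exists j.
  exists (mkseq (h x) j); by rewrite /= /G size_mkseq.
apply: (sub_countable (subset_card_le sub)).
apply: bigcup_countable; first exact: countableP.
move=> s fs; exact: finite_set_countable.
Qed.
Lemma p5p6 : P5 E -> P6 E.
Proof.
move=> [Nf [cN Hrad]] A Hunc.
move/countable_injP: cN => [fN fNinj].
pose P x k m := (0 < m)%N /\ exists F, Nf F /\ fN F = k /\
  exists eps : R, eps != 0 /\ F (eps *: x) /\ `|eps^-1| <= (m.-1)%:R.
pose h x k := xget 0%N (P x k).
have hP x k : (h x k != 0)%N -> P x k (h x k).
  move=> Hn; have [[m Pm]|nP] := pselect (exists m, P x k m); first by rewrite /h; apply: xgetPex; exists m.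
  move: Hn; rewrite /h xgetPN ?eqxx // => m Pm; apply: nP; by exists m.
have [y Hy] := @condense _ A h Hunc.
pose S j := [set x | A x /\ mkseq (h x) j = mkseq (h y) j].
have /choice [e He] : forall j, exists e : nat -> E, (forall n, S j (e n)) /\ injective e.
  move=> j; have [e e1 e2] := @inj_nat _ _ (Hy j); by exists e.
pose B := [set x | exists j i, (i <= j)%N /\ x = e j i].
exists B; split; [|split].
- by move=> x [j [i [_ ->]]]; exact: ((He j).1 i).1.
- move/finite_seqP => [s Bs].
  pose l := map (e (size s)) (iota 0 (size s).+1).
  have : (size l <= size s)%N.
    apply: uniq_leq_size.
      rewrite map_inj_in_uniq ?iota_uniq //; move=> a b _ _; exact: (He _).2.
    move=> z /mapP [i]; rewrite mem_iota add0n => /andP[_ Hi] ->.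
    have : B (e (size s) i) by exists (size s), i; split => //; rewrite -ltnS.
    by rewrite Bs.
  by rewrite size_map size_iota ltnn.
move=> U HU.
have [d d0 [W W0 HW]] := @scale_nbhs 0 U HU.
have [F NfF [eps [eps0 [Fy FW]]]] := Hrad W W0 y.
pose k := fN F.
have [m0 Hm0] := archi_nat `|eps^-1|.
have Pyk : P y k (m0.+1).
  split => //; exists F; split => //; split => //; exists eps; split => //; split => //.
  by rewrite succnK; exact: ltW.
have hyk : (h y k != 0)%N.
  by have := xgetPex 0%N (ex_intro _ _ Pyk) => -[]; rewrite -/(h y k) lt0n.
set mm := h y k in hyk.
have Htail : forall x, (forall k', (k' < k.+1)%N -> h x k' = h y k') ->
    forall n : nat, (mm%:R / d < n%:R) -> exists2 u, U u & n%:R *: u = x.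
  move=> x Hx n Hn.
  have := hP x k; rewrite Hx ?ltnSn // => /(_ hyk) [_ [F' [NfF' [fF' [eps' [eps'0 [F'x Heps']]]]]]].
  have FF' : F' = F by apply: fNinj; rewrite ?inE //; exact: mem_set.
  subst F'.
  have mm0 : (0 < mm)%N by rewrite lt0n.
  have n0 : (0 < n)%N.
    by rewrite -(ltr0n R); apply: le_lt_trans Hn; rewrite divr_ge0 ?ler0n // ltW.
  exists ((n%:R)^-1 *: (eps'^-1 *: (eps' *: x))).
    rewrite scalerA; apply: HW; last exact: FW.
    rewrite normrM ger0_norm ?invr_ge0 ?ler0n //.
    apply: (le_lt_trans (ler_wpM2l _ Heps')); first by rewrite invr_ge0 ler0n.
    rewrite mulrC ltr_pdivrMr ?ltr0n //.
    move: Hn; rewrite ltr_pdivrMr // => Hn.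
    apply: le_lt_trans (_ : mm%:R < _); last by rewrite mulrC.
    by rewrite ler_nat leq_pred.
  by rewrite !scalerA mulrA divff ?pnatr_eq0 -?lt0n // mul1r mulVf // scale1r.
have Hpt : forall z : E, exists n0, forall n, (n0 <= n)%N -> exists2 u, U u & n%:R *: u = z.
  move=> z; have [d' d'0 [W' W'z HW']] := @scale_nbhs z U HU.
  have [N HN] := archi_nat d'^-1.
  exists N.+1 => n Nn.
  have n0 : (0 < n)%N by apply: leq_trans Nn.
  exists (n%:R^-1 *: z); last by rewrite scalerA divff ?scale1r // pnatr_eq0 -lt0n.
  apply: HW' (nbhs_singleton W'z).
  rewrite ger0_norm ?invr_ge0 ?ler0n // -[d']invrK ltf_pV2 ?posrE ?invr_gt0 ?ltr0n //.
  apply: (lt_le_trans HN); rewrite ler_nat; exact: ltnW.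
have /choice [g Hg] := Hpt.
have [nt Hnt] := archi_nat (mm%:R / d).
exists (maxn nt (\max_(j < k.+1) \max_(i < j.+1) g (e j i))).
move=> x [j [i [ij ->]]].
case: (ltnP k j) => Hkj.
  apply: Htail.
    move=> k' Hk'.
    have Hk'j : (k' < j)%N := leq_trans Hk' Hkj.
    by have := congr1 (fun s => nth 0%N s k') ((He j).1 i).2; rewrite !nth_mkseq.
  apply: (lt_le_trans Hnt); rewrite ler_nat; exact: leq_maxl.
apply: (Hg (e j i)).
apply: (leq_trans _ (leq_maxr _ _)).
have Hkj' : (j < k.+1)%N by [].
have ij' : (i < j.+1)%N by [].
apply: (leq_trans _ (@leq_bigmax _ (fun j' : 'I_k.+1 => \max_(i' < (val j').+1) g (e j' i')) (Ordinal Hkj'))).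
exact: (@leq_bigmax _ (fun i' : 'I_j.+1 => g (e j i')) (Ordinal ij')).
Qed.
Lemma finite_nat_bound (A : set nat) : finite_set A -> exists M, forall m, A m -> (m < M)%N.
Proof.
move=> /finite_seqP[s ->]; exists (\sum_(i <- s) i).+1 => m /= ms.
rewrite ltnS; elim: s ms => [//|a s IH]; rewrite in_cons big_cons => /orP[/eqP->|/IH]; first exact: leq_addr.
move=> H; exact: (leq_trans H (leq_addl _ _)).
Qed.
Lemma infinite_nat (A : set nat) : (forall N, exists2 n, (N <= n)%N & A n) -> infinite_set A.
Proof.
move=> H /finite_nat_bound[M HM]; have [n Mn /HM] := H M; by rewrite ltnNge Mn.
Qed.
Lemma cvg_clusters (u : nat -> E) (x : E) : u @ \oo --> x -> clusters_at u x.
Proof.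
move=> /cvg_seqP H V /H[N HN]; apply: infinite_nat => M.
exists (maxn N M); [exact: leq_maxr| apply: HN; exact: leq_maxl].
Qed.
Lemma p2p3 : P2 E -> P3 E.
Proof.
move=> [Nf [cN HN]]; exists Nf; split => // O HO u /cvg_clusters Hu; exact: HN.
Qed.
Lemma p3p4 : P3 E -> P4 E.
Proof.
move=> [Nf [cN HN]]; exists Nf; split => // O HO u Hu.
have [N NN [NO /infinite_setN0 [n Hn]]] := HN O HO u Hu.
by exists N => //; split => //; exists n.
Qed.
Lemma p4p5 : P4 E -> P5 E.
Proof.
move=> [Nf [cN HN]]; exists Nf; split => // U HU x.
have Hu : (fun n : nat => (n.+1%:R)^-1 *: x) @ \oo --> (0 : E).
  apply/cvg_seqP => V HV.
  have [d d0 [W /nbhs_singleton Wx HW]] := @scale_nbhs x V HV.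
  have [N HN'] := archi_nat d^-1.
  exists N => n Nn; apply: HW => //.
  rewrite ger0_norm ?invr_ge0 ?ler0n// -[d]invrK ltf_pV2 ?posrE ?invr_gt0 ?ltr0n//.
  apply: (lt_le_trans HN'); rewrite ler_nat; exact: (leq_trans Nn).
have [N NN [NU [n Hn]]] := HN U HU _ Hu.
exists N => //; exists (n.+1%:R)^-1; split => //; by rewrite invr_eq0 pnatr_eq0.
Qed.
Lemma p1p2 : P1 E -> P2 E.
Proof.
move=> [U [Unb [Ubase Umon]]].
pose D (s : seq nat) : set E := [set z | forall b : nat -> nat,
  (forall i, (i < size s)%N -> b i = nth 0%N s i) -> U b z].
exists (range D); split.
  exact: (sub_countable (card_image_le _ _) (countableP _)).
move=> O HO u Hu; have [g Hg] := Ubase O HO.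
apply: contrapT => Hneg.
have Hfin k : finite_set [set m | D (mkseq g k) (u m)].
  apply: contrapT => Hinf; apply: Hneg; exists (D (mkseq g k)); first by exists (mkseq g k).
  split => // z Dz; apply: Hg; apply: Dz => i; rewrite size_mkseq => Hi.
  by rewrite nth_mkseq.
have /choice [M HM] : forall k, exists M, forall m, D (mkseq g k) (u m) -> (m < M)%N.
  move=> k; have [M0 HM0] := @finite_nat_bound _ (Hfin k); exists M0 => m Hm; exact: HM0.
have /choice [f Hf] : forall km : nat * nat, exists b : nat -> nat,
    (forall i, (i < km.1)%N -> b i = g i) /\ ((M km.1 <= km.2)%N -> ~ U b (u km.2)).
  move=> [k m] /=; case: (leqP (M k) m) => Hm; last first.
    by exists g; split => //; rewrite leqNgt Hm.
  have : ~ D (mkseq g k) (u m) by move=> /HM; rewrite ltnNge Hm.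
  move=> HnD.
  have [b /not_implyP [Hb HUb]] : exists b : nat -> nat, ~ ((forall i, (i < size (mkseq g k))%N ->
     b i = nth 0%N (mkseq g k) i) -> U b (u m)).
    by apply/existsNP => H; apply: HnD => b; exact: H.
  exists b; split => // i Hi.
  by rewrite Hb ?size_mkseq // nth_mkseq.
pose T i := (\sum_(j < i.+2) (M j).+1)%N.
have T_S i : T i.+1 = (T i + (M i.+2).+1)%N by rewrite /T big_ord_recr.
have T_M i : (M i.+1 < T i)%N.
  by rewrite /T big_ord_recr /= ltn_addl.
have T_gt i : (i < T i)%N.
  elim: i => [|i IH]; first by rewrite /T !big_ord_recr /= big_ord0 add0n ltn_addl.
  by rewrite T_S addnS ltnS (leq_trans IH) // leq_addr.
have T_mono : {homo T : i j / (i <= j)%N}.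
  apply: homo_leq => //; first exact: leq_trans.
  by move=> i; rewrite T_S leq_addr.
pose beta i := maxn (g i) (\max_(m < (T i).+1) \max_(k < m.+1) f (val k, val m) i).
have Hbeta m : (M 0 <= m)%N -> ~ U beta (u m).
  move=> Hm.
  have exP : exists i, (m < T i)%N by exists m.
  case: (ex_minnP exP) => k Hk Hmin.
  have Hkm : (k <= m)%N := Hmin m (T_gt m).
  have HMk : (M k <= m)%N.
    case: k Hk Hmin Hkm => [//|k] Hk Hmin Hkm.
    have : (T k <= m)%N by rewrite leqNgt; apply/negP => /Hmin; rewrite ltnn.
    by move/(leq_trans (T_M k))/ltnW.
  have [Hf1 Hf2] := Hf (k, m); move: (Hf2 HMk) => /= HnU HU; apply: HnU.
  suff Hle : forall i, (f (k, m) i <= beta i)%N by exact: (Umon _ _ Hle _ HU).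
  move=> i.
  case: (ltnP i k) => Hik; first by rewrite Hf1 // leq_maxl.
  apply: (leq_trans _ (leq_maxr _ _)).
  have HmT : (m < (T i).+1)%N by rewrite ltnS ltnW // (leq_trans Hk) // T_mono.
  apply: (leq_trans _ (@leq_bigmax _ (fun j : 'I_(T i).+1 =>
    \max_(k0 < (val j).+1) f (val k0, val j) i) (Ordinal HmT))).
  have Hkm' : (k < m.+1)%N by [].
  exact: (@leq_bigmax _ (fun j : 'I_m.+1 => f (val j, m) i) (Ordinal Hkm')).
have := Hu _ (Unb beta); apply.
apply: (@sub_finite_set _ _ `I_(M 0)); last exact: finite_II.
move=> m /= HUm; rewrite ltnNge; apply/negP => /Hbeta; exact.
Qed.
End S.

Theorem theorem5p2 (R : realType) (E : tvsType R) (hE : hausdorff_space E) :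
  (P1 E -> P2 E) /\ (P2 E -> P3 E) /\ (P3 E -> P4 E) /\ (P4 E -> P5 E) /\
  (P5 E -> P6 E) /\
  ((exists B : set E, hamel_basis B /\ ~ countable B) -> P6 E -> P7 E).
Proof.
split; first exact: p1p2.
split; first exact: p2p3.
split; first exact: p3p4.
split; first exact: p4p5.
split; first exact: p5p6.
exact: p6p7.
Qed.
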